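(* Let $G$ and $H$ be graphs and let $\ell\ge 1$ be an integer. If $G$ has an $H$-partition of layered width $\ell$, then $\mathrm{tn}(G)\le 3\ell\cdot \mathrm{tn}(H)$.
   Context: All graphs are finite, simple and undirected. A $t$-track assignment of a graph $G$ is a partition of $V(G)$ into $t$ sets $V_1,\dots,V_t$ (tracks), each an independent set of $G$, together with a total order $<_i$ on each $V_i$. An X-crossing consists of two edges $(u,v)$ and $(x,y)$ with $u,x\in V_i$, $v,y\in V_j$ ($i\neq j$), $u<_i x$ and $y<_j v$. A $t$-track layout is a $t$-track assignment with no X-crossing; the track number $\mathrm{tn}(G)$ is the minimum $t$ for which $G$ has a $t$-track layout. An $H$-partition of $G$ is a partition of $V(G)$ into disjoint bags $\{A_x : x\in V(H)\}$ indexed by $V(H)$ such that for every edge $(u,v)\in E(G)$ either $u,v\in A_x$ for some $x$, or there is an edge $(x,y)\in E(H)$ with $u\in A_x$, $v\in A_y$. A layering of $G$ is an ordered partition $(V_0,V_1,\dots)$ of $V(G)$ such that for every edge $(v,w)$ with $v\in V_i$, $w\in V_j$ we have $|i-j|\le 1$. The layered width of an $H$-partition is the minimum $\ell$ such that for some layering $(V_0,V_1,\dots)$ of $G$, $|A_x\cap V_i|\le \ell$ for every $x\in V(H)$ and every $i\ge 0$. *)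

(* Defs.v *)
From HB Require Import structures.
From mathcomp Require Import all_boot.
From Stdlib Require Import ClassicalEpsilon.
Set Implicit Arguments. Unset Strict Implicit. Unset Printing Implicit Defensive.

Record graph := Graph {
  vert :> finType;
  adj : rel vert;
  adj_sym : symmetric adj;
  adj_irr : irreflexive adj }.

Definition decideP (P : Prop) : bool :=
  if excluded_middle_informative P then true else false.

Lemma decidePP (P : Prop) : reflect P (decideP P).
Proof. rewrite /decideP; case: excluded_middle_informative => H; by constructor. Qed.

(* A t-track assignment: tr assigns each vertex its track (tracks are
   'I_t, possibly empty); lt is a relation whose restriction to each track
   is a strict total order. *)
Definition track_layout (G : graph) (t : nat) (tr : G -> 'I_t) (lt : rel G) : Prop :=
  [/\
      (forall u v, adj u v -> tr u != tr v),
      (forall u, ~~ lt u u),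
      (forall u v w, tr u = tr v -> tr v = tr w -> lt u v -> lt v w -> lt u w),
      (forall u v, tr u = tr v -> u != v -> lt u v || lt v u)
    &
      (forall u v x y, adj u v -> adj x y ->
         tr u = tr x -> tr v = tr y -> tr u != tr v ->
         lt u x -> lt y v -> False)].

Definition has_track_layout (G : graph) (t : nat) : Prop :=
  exists (tr : G -> 'I_t) (lt : rel G), track_layout tr lt.

Lemma has_track_layout_card (G : graph) : has_track_layout G #|G|.
Proof.
exists (@enum_rank G), (fun _ _ => false); split => //.
- move=> u v uv; apply/negP => /eqP /enum_rank_inj E.
  by move: uv; rewrite E adj_irr.
- by move=> u v /enum_rank_inj ->; rewrite eqxx.
Qed.

Lemma tn_ex (G : graph) : exists t, decideP (has_track_layout G t).
Proof. by exists #|G|; apply/decidePP; apply: has_track_layout_card. Qed.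

Definition tn (G : graph) : nat := ex_minn (tn_ex G).

(* H-partition given by the bag map f : bag of x is A_x = f^-1(x). *)
Definition H_partition (G H : graph) (f : G -> H) : Prop :=
  forall u v, adj u v -> f u = f v \/ adj (f u) (f v).

Definition layering (G : graph) (L : G -> nat) : Prop :=
  forall u v, adj u v -> (L u <= (L v).+1) && (L v <= (L u).+1).

Definition width_at_most (G H : graph) (f : G -> H) (l : nat) : Prop :=
  exists L : G -> nat, layering L /\
    forall (x : H) (i : nat), #|[set v : G | (f v == x) && (L v == i)]| <= l.

Lemma lw_ex (G H : graph) (f : G -> H) : exists l, decideP (width_at_most f l).
Proof.
exists #|G|; apply/decidePP; exists (fun _ => 0); split => //.
by move=> x i; apply: max_card.
Qed.

Definition layered_width (G H : graph) (f : G -> H) : nat := ex_minn (lw_ex f).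

(* Main.v *)
Require Import Defs.
From HB Require Import structures.
From mathcomp Require Import all_boot.
From mathcomp Require Import zify.
Set Implicit Arguments. Unset Strict Implicit.

Definition gen_layout (G : graph) (T : finType) (tr : G -> T) (lt : rel G) : Prop :=
  [/\ (forall u v, adj u v -> tr u != tr v),
      (forall u, ~~ lt u u),
      (forall u v w, tr u = tr v -> tr v = tr w -> lt u v -> lt v w -> lt u w),
      (forall u v, tr u = tr v -> u != v -> lt u v || lt v u)
    & (forall u v x y, adj u v -> adj x y ->
         tr u = tr x -> tr v = tr y -> tr u != tr v ->
         lt u x -> lt y v -> False)].

Lemma gen_to (G : graph) (T : finType) (tr : G -> T) (lt : rel G) (n : nat) :
  gen_layout tr lt -> #|T| <= n -> has_track_layout G n.
Proof.
move=> [h1 h2 h3 h4 h5] le.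
pose tr' u := widen_ord le (enum_rank (tr u)).
have E u v : (tr' u = tr' v) <-> (tr u = tr v).
  split; last by rewrite /tr' => ->.
  by move=> /(congr1 val) /= /val_inj /enum_rank_inj.
have En u v : (tr' u != tr' v) = (tr u != tr v).
  apply/idP/idP; apply: contra => /eqP /E /eqP //.
exists tr', lt; split.
- by move=> u v /h1; rewrite En.
- exact: h2.
- by move=> u v w /E a /E b; apply: h3.
- by move=> u v /E; apply: h4.
- by move=> u v x y a b /E c /E d; rewrite En; apply: h5.
Qed.

Theorem lemma7 (G H : graph) (l : nat) (f : G -> H) :
  1 <= l -> H_partition f -> layered_width f = l ->
  tn G <= 3 * l * tn H.
Proof.
move=> l1 Hp.
rewrite /layered_width; case: ex_minnP => m /decidePP [L [Lay Wd]] _ Em; subst m.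
have [t [-> [trH [ltH [i1 i2 i3 i4 i5]]]]] : exists t, tn H = t /\ has_track_layout H t.
  by rewrite /tn; case: ex_minnP => t /decidePP Ht _; exists t.
pose S x i := [set w : G | (f w == x) && (L w == i)].
pose idx v := index v (enum (S (f v) (L v))).
have idx_lt v : idx v < l.
  apply: leq_trans (Wd (f v) (L v)).
  by rewrite cardE index_mem mem_enum inE !eqxx.
have idx_inj v w : f v = f w -> L v = L w -> idx v = idx w -> v = w.
  rewrite /idx => e1 e2; rewrite e1 e2 => e3.
  have hv : v \in enum (S (f w) (L w)) by rewrite mem_enum inE e1 e2 !eqxx.
  have hw : w \in enum (S (f w) (L w)) by rewrite mem_enum inE !eqxx.
  by rewrite -(nth_index v hv) e3 (nth_index v hw).
pose tr (v : G) : 'I_t * 'I_3 * 'I_l :=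
  (trH (f v), Ordinal (ltn_pmod (L v) (isT : 0 < 3)), Ordinal (idx_lt v)).
pose lt (u v : G) := (L u < L v) || ((L u == L v) && ltH (f u) (f v)).
have trE u v : tr u = tr v ->
    [/\ trH (f u) = trH (f v), L u %% 3 = L v %% 3 & idx u = idx v].
  by rewrite /tr => -[a b c].
have LE u v : adj u v -> L u %% 3 = L v %% 3 -> L u = L v.
  move=> /Lay /andP [a b] c; lia.
rewrite {1}/tn; case: ex_minnP => m _ mn; apply: mn; apply/decidePP.
apply: (gen_to (tr:=tr) (lt:=lt)); last by rewrite card_prod !card_prod !card_ord; lia.
split.
- move=> u v uv; apply/eqP => /trE [a b c].
  have e := LE _ _ uv b.
  case: (Hp _ _ uv) => [fe|fa].
  + by move: uv; rewrite (idx_inj _ _ fe e c) adj_irr.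
  + by move: (i1 _ _ fa); rewrite a eqxx.
- by move=> u; rewrite /lt ltnn eqxx /= i2.
- move=> u v w /trE [a _ _] /trE [b _ _]; rewrite /lt.
  case/orP => [h|/andP [/eqP h h']]; case/orP => [g|/andP [/eqP g g']].
  + by rewrite (ltn_trans h g).
  + by rewrite -g h.
  + by rewrite h g.
  + by rewrite h g eqxx (i3 _ _ _ a b h' g') orbT.
- move=> u v /trE [a b c] nuv; rewrite /lt.
  case: (ltngtP (L u) (L v)) => //= e.
  have nf : f u != f v by apply: contra nuv => /eqP fe; rewrite (idx_inj _ _ fe e c).
  by rewrite ?e ?eqxx /= (i4 _ _ a nf).
- move=> u v x y uv xy /trE [a1 b1 _] /trE [a2 b2 _] ne.
  have ha := Lay _ _ uv; have hb := Lay _ _ xy.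
  rewrite /lt => h1 h2.
  have [e1 e2] : L u = L x /\ L y = L v.
    move: ha hb => /andP [? ?] /andP [? ?].
    case/orP: h1 => [?|/andP [/eqP ? _]]; case/orP: h2 => [?|/andP [/eqP ? _]]; lia.
  move: h1 h2; rewrite e1 e2 !ltnn !eqxx /= => h1 h2.
  case: (eqVneq (trH (f u)) (trH (f v))) => [et|nt].
  + have fuv : f u = f v.
      case: (Hp _ _ uv) => // fa; by move: (i1 _ _ fa); rewrite et eqxx.
    have fxy : f x = f y.
      case: (Hp _ _ xy) => // fa; by move: (i1 _ _ fa); rewrite -a1 -a2 et eqxx.
    move: h2; rewrite -fxy -fuv => h2.
    by move: (i2 (f u)); rewrite (i3 _ _ _ a1 (esym a1) h1 h2).
  + have fa : adj (f u) (f v).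
      case: (Hp _ _ uv) => // fe; by move: nt; rewrite fe eqxx.
    have fb : adj (f x) (f y).
      case: (Hp _ _ xy) => // fe; by move: nt; rewrite a1 a2 fe eqxx.
    exact: (i5 _ _ _ _ fa fb a1 a2 nt h1 h2).
Qed.
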